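(* Let $P$ be a convex polygon with no two edges parallel. For any LMAP $Q$ in $P$, at least one of the following holds: (a) $Q$ has an anchored narrow corner; (b) $Q$ has an anchored broad corner that has at least one adjacent corner anchored; (c) all four corners of $Q$ are even.
   Context: $P$ is a compact convex polygon with boundary $\partial P$, edges $e_1,\ldots,e_n$ clockwise and vertices $v_1,\ldots,v_n$, $e_i$ the open segment from $v_i$ to $v_{i+1}$ (indices mod $n$). $\ell_i$ is the line containing $e_i$, $\mathsf{I}_{i,j}=\ell_i\cap\ell_j$. For distinct edges, $e_i\prec e_j$ means $\mathsf{I}_{i,j}=v_i+t(v_{i+1}-v_i)$ for some $t\ge1$ (equivalently the clockwise turning angle from direction $v_{i+1}-v_i$ to $v_{j+1}-v_j$ is in $(0,\pi)$). A unit is an edge or a vertex of $P$; for $X\in\partial P$, $\mathbf{u}(X)$ is the unique unit containing $X$. For a vertex $v_i$, $back(v_i)=e_{i-1}$, $forw(v_i)=e_i$; for an edge $e$, $back(e)=forw(e)=e$. A unit $u$ is chasing a unit $u'$ if $back(u)\prec back(u')$ and $forw(u)\prec forw(u')$. For a parallelogram $A_0A_1A_2A_3$ inscribed in $P$ (corners on $\partial P$, in clockwise order, subscripts mod 4), corner $A_i$ is narrow if $\mathbf{u}(A_{i-1})$ is chasing $\mathbf{u}(A_{i+1})$; broad if $\mathbf{u}(A_{i+1})$ is chasing $\mathbf{u}(A_{i-1})$; even if neither of $\mathbf{u}(A_{i+1}),\mathbf{u}(A_{i-1})$ is chasing the other. A corner is anchored if it coincides with a vertex of $P$. A parallelogram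 lies in $P$ if its corners lie in $P$; $A_0A_1A_2A_3$ lying in $P$ is locally maximal if there is $\delta>0$ such that every parallelogram $B_0B_1B_2B_3$ lying in $P$ with $|A_iB_i|<\delta$ for all $i$ has area at most that of $A_0A_1A_2A_3$; it is slidable if two corners lie in the same open edge. An LMAP is a locally maximal non-slidable parallelogram lying in $P$ (every LMAP is inscribed). *)

(* Defs.v *)
From Stdlib Require Import Reals Lra Lia Arith.
Open Scope R_scope.

Definition pt : Type := (R * R)%type.
Definition padd (p q : pt) : pt := (fst p + fst q, snd p + snd q).
Definition psub (p q : pt) : pt := (fst p - fst q, snd p - snd q).
Definition pscale (t : R) (p : pt) : pt := (t * fst p, t * snd p).
(* z-component of the cross product; < 0 means a clockwise turn *)
Definition cross (p q : pt) : R := fst p * snd q - snd p * fst q.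
Definition dist (p q : pt) : R := sqrt ((fst p - fst q) ^ 2 + (snd p - snd q) ^ 2).

(* Polygon with n vertices v 0, ..., v (n-1) (paper: v_1..v_n), indices mod n. *)
Definition vtx (n : nat) (v : nat -> pt) (i : nat) : pt := v (Nat.modulo i n).
Definition edir (n : nat) (v : nat -> pt) (i : nat) : pt :=
  psub (vtx n v (S i)) (vtx n v i).

(* Convex polygon, vertices in clockwise order, genuine vertices:
   every other vertex lies strictly to the right of each directed edge. *)
Definition convex_polygon_cw (n : nat) (v : nat -> pt) : Prop :=
  (3 <= n)%nat /\
  forall i j, (i < n)%nat -> (j < n)%nat -> j <> i -> j <> Nat.modulo (S i) n ->
    cross (edir n v i) (psub (vtx n v j) (vtx n v i)) < 0.

Definition no_parallel_edges (n : nat) (v : nat -> pt) : Prop :=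
  forall i j, (i < n)%nat -> (j < n)%nat -> i <> j ->
    cross (edir n v i) (edir n v j) <> 0.

Definition in_P (n : nat) (v : nat -> pt) (X : pt) : Prop :=
  forall i, (i < n)%nat -> cross (edir n v i) (psub X (vtx n v i)) <= 0.

Definition on_line (n : nat) (v : nat -> pt) (j : nat) (X : pt) : Prop :=
  cross (edir n v j) (psub X (vtx n v j)) = 0.

Definition prec (n : nat) (v : nat -> pt) (i j : nat) : Prop :=
  i <> j /\ exists t, 1 <= t /\ on_line n v j (padd (vtx n v i) (pscale t (edir n v i))).

Definition in_open_edge (n : nat) (v : nat -> pt) (i : nat) (X : pt) : Prop :=
  exists t, 0 < t < 1 /\ X = padd (vtx n v i) (pscale t (edir n v i)).

Inductive punit : Type := UEdge (i : nat) | UVert (i : nat).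

Definition in_unit (n : nat) (v : nat -> pt) (X : pt) (u : punit) : Prop :=
  match u with
  | UEdge i => (i < n)%nat /\ in_open_edge n v i X
  | UVert i => (i < n)%nat /\ X = vtx n v i
  end.

Definition back (n : nat) (u : punit) : nat :=
  match u with
  | UEdge i => i
  | UVert i => Nat.modulo (i + n - 1) n
  end.

Definition forw (u : punit) : nat :=
  match u with
  | UEdge i => i
  | UVert i => i
  end.

Definition chasing (n : nat) (v : nat -> pt) (u u' : punit) : Prop :=
  prec n v (back n u) (back n u') /\ prec n v (forw u) (forw u').

Definition corner (A : nat -> pt) (k : nat) : pt := A (Nat.modulo k 4).

(* parallelogram with corners in clockwise order (non-degenerate) *)
Definition is_parallelogram (A : nat -> pt) : Prop :=
  padd (A 0%nat) (A 2%nat) = padd (A 1%nat) (A 3%nat) /\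
  cross (psub (A 1%nat) (A 0%nat)) (psub (A 3%nat) (A 0%nat)) < 0.

Definition area (A : nat -> pt) : R :=
  Rabs (cross (psub (A 1%nat) (A 0%nat)) (psub (A 3%nat) (A 0%nat))).

Definition lies_in (n : nat) (v : nat -> pt) (A : nat -> pt) : Prop :=
  forall k, (k < 4)%nat -> in_P n v (A k).

Definition locally_maximal (n : nat) (v : nat -> pt) (A : nat -> pt) : Prop :=
  exists delta, 0 < delta /\
    forall B : nat -> pt, is_parallelogram B -> lies_in n v B ->
      (forall k, (k < 4)%nat -> dist (A k) (B k) < delta) ->
      area B <= area A.

Definition slidable (n : nat) (v : nat -> pt) (A : nat -> pt) : Prop :=
  exists k l i, (k < 4)%nat /\ (l < 4)%nat /\ k <> l /\ (i < n)%nat /\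
    in_open_edge n v i (A k) /\ in_open_edge n v i (A l).

Definition LMAP (n : nat) (v : nat -> pt) (A : nat -> pt) : Prop :=
  is_parallelogram A /\ lies_in n v A /\ locally_maximal n v A /\ ~ slidable n v A.

Definition anchored (n : nat) (v : nat -> pt) (X : pt) : Prop :=
  exists i, (i < n)%nat /\ X = vtx n v i.

(* corner A_k: neighbours A_{k-1} = corner (k+3), A_{k+1} = corner (k+1) *)
Definition narrow (n : nat) (v : nat -> pt) (A : nat -> pt) (k : nat) : Prop :=
  exists u u', in_unit n v (corner A (k + 3)) u /\ in_unit n v (corner A (k + 1)) u' /\
    chasing n v u u'.

Definition broad (n : nat) (v : nat -> pt) (A : nat -> pt) (k : nat) : Prop :=
  exists u u', in_unit n v (corner A (k + 3)) u /\ in_unit n v (corner A (k + 1)) u' /\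
    chasing n v u' u.

Definition even (n : nat) (v : nat -> pt) (A : nat -> pt) (k : nat) : Prop :=
  exists u u', in_unit n v (corner A (k + 3)) u /\ in_unit n v (corner A (k + 1)) u' /\
    ~ chasing n v u u' /\ ~ chasing n v u' u.

(* Main.v *)
Require Import Defs.
From Stdlib Require Import Reals Lra Lia Arith Classical.
Open Scope R_scope.


Ltac geo := unfold cross, psub, padd, pscale in *; simpl in *.

Lemma modS n i : (i < n)%nat -> ((S i = n /\ S i mod n = 0) \/ (S i < n /\ S i mod n = S i))%nat.
Proof.
  intros H. destruct (Nat.eq_dec (S i) n) as [E|E].
  - left. split; auto. rewrite E. apply Nat.Div0.mod_same.
  - right. split; [lia|]. apply Nat.mod_small. lia.
Qed.

Lemma vtx_mod n v i : (n <> 0)%nat -> vtx n v (i mod n) = vtx n v i.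
Proof. intros H. unfold vtx. rewrite Nat.Div0.mod_mod. reflexivity. Qed.

Lemma edir_mod n v i : (n <> 0)%nat -> edir n v (i mod n) = edir n v i.
Proof.
  intros H. unfold edir. rewrite vtx_mod by auto.
  unfold vtx. f_equal. f_equal.
  replace (S (i mod n)) with (i mod n + 1)%nat by lia.
  replace (S i) with (i + 1)%nat by lia.
  rewrite Nat.Div0.add_mod_idemp_l. reflexivity.
Qed.

Lemma vtx_S_mod n v i : (n <> 0)%nat -> vtx n v (S i mod n) = vtx n v (S i).
Proof. apply vtx_mod. Qed.

Lemma vert_in n v k m : convex_polygon_cw n v -> (k < n)%nat ->
  cross (edir n v k) (psub (vtx n v m) (vtx n v k)) <= 0.
Proof.
  intros [H3 CV] Hk.
  rewrite <- (vtx_mod n v m) by lia.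
  assert (Hm : (m mod n < n)%nat) by (apply Nat.mod_upper_bound; lia).
  destruct (Nat.eq_dec (m mod n) k) as [E|E].
  - rewrite E. geo. lra.
  - destruct (Nat.eq_dec (m mod n) (S k mod n)) as [E2|E2].
    + rewrite E2. rewrite vtx_S_mod by lia. unfold edir. geo. lra.
    + apply Rlt_le. apply CV; auto.
Qed.

Lemma closed_edge_in n v i t : convex_polygon_cw n v -> 0 <= t <= 1 ->
  in_P n v (padd (vtx n v i) (pscale t (edir n v i))).
Proof.
  intros Hc Ht k Hk.
  pose proof (vert_in n v k i Hc Hk) as A.
  pose proof (vert_in n v k (S i) Hc Hk) as B.
  unfold edir in *. geo. nra.
Qed.

Lemma open_strict n v i k t : convex_polygon_cw n v -> (i < n)%nat -> (k < n)%nat -> k <> i ->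
  0 < t < 1 ->
  cross (edir n v k) (psub (padd (vtx n v i) (pscale t (edir n v i))) (vtx n v k)) < 0.
Proof.
  intros Hc Hi Hk Hki Ht.
  pose proof (vert_in n v k i Hc Hk) as A.
  pose proof (vert_in n v k (S i) Hc Hk) as B.
  destruct Hc as [H3 CV].
  assert (Hcase: cross (edir n v k) (psub (vtx n v i) (vtx n v k)) < 0 \/
                 cross (edir n v k) (psub (vtx n v (S i)) (vtx n v k)) < 0).
  { destruct (Nat.eq_dec i (S k mod n)) as [E1|E1].
    - right. rewrite <- vtx_S_mod by lia. apply CV; auto.
      + apply Nat.mod_upper_bound; lia.
      + intro E. apply Hki. destruct (modS n i Hi) as [[? ?]|[? ?]]; destruct (modS n k Hk) as [[? ?]|[? ?]]; lia.
      + intro E. destruct (modS n i Hi) as [[? ?]|[? ?]]; destruct (modS n k Hk) as [[? ?]|[? ?]]; lia.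
    - left. apply CV; auto. }
  unfold edir in *. geo. nra.
Qed.

Lemma modSS n i : (3 <= n)%nat -> (i < n)%nat ->
  (S (S i) mod n <> i /\ S (S i) mod n <> S i mod n /\ S (S i) mod n < n)%nat.
Proof.
  intros H3 Hi.
  assert (HSS: (S (S i) mod n < n)%nat) by (apply Nat.mod_upper_bound; lia).
  destruct (Nat.eq_dec (S (S i)) n) as [E|E].
  - rewrite E, Nat.Div0.mod_same. rewrite (Nat.mod_small (S i)) by lia. lia.
  - destruct (Nat.eq_dec (S i) n) as [E2|E2].
    + rewrite E2, Nat.Div0.mod_same.
      replace (S n) with (1 + 1 * n)%nat by lia. rewrite Nat.Div0.mod_add.
      rewrite Nat.mod_small by lia. lia.
    + rewrite !Nat.mod_small by lia. lia.
Qed.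

Lemma edir_S_mod n v i : (n <> 0)%nat -> edir n v (S i mod n) = edir n v (S i).
Proof. apply edir_mod. Qed.

Lemma consec n v i : convex_polygon_cw n v -> (i < n)%nat ->
  cross (edir n v i) (edir n v (S i)) < 0.
Proof.
  intros [H3 CV] Hi.
  destruct (modSS n i H3 Hi) as [A [B C]].
  pose proof (CV i (S (S i) mod n) Hi C A B) as H.
  rewrite vtx_mod in H by lia.
  unfold edir in *. geo. nra.
Qed.

Lemma prev_idx n j : (j < n)%nat -> exists jm, (jm < n /\ S jm mod n = j)%nat.
Proof.
  intros Hj. destruct j as [|j].
  - exists (n - 1)%nat. split; [lia|]. replace (S (n-1)) with n by lia. apply Nat.Div0.mod_same.
  - exists j. split; [lia|]. apply Nat.mod_small; lia.
Qed.

Lemma prec_cross n v i j : convex_polygon_cw n v -> (i < n)%nat -> (j < n)%nat ->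
  prec n v i j -> cross (edir n v i) (edir n v j) < 0.
Proof.
  intros Hc Hi Hj [Hij [t [Ht Hl]]].
  pose proof (vert_in n v j (S i) Hc Hj) as F1.
  apply Rnot_le_lt. intro Hneg.
  unfold on_line in Hl.
  assert (E: cross (edir n v j) (psub (vtx n v (S i)) (vtx n v j)) = 0).
  { unfold edir in *. geo. nra. }
  destruct Hc as [H3 CV].
  rewrite <- vtx_S_mod in E by lia.
  assert (HSi: (S i mod n < n)%nat) by (apply Nat.mod_upper_bound; lia).
  destruct (Nat.eq_dec (S i mod n) j) as [E1|E1].
  - pose proof (consec n v i (conj H3 CV) Hi) as C.
    rewrite <- edir_S_mod in C by lia. rewrite E1 in C. lra.
  - destruct (Nat.eq_dec (S i mod n) (S j mod n)) as [E2|E2].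
    + apply Hij. destruct (modS n i Hi) as [[? ?]|[? ?]]; destruct (modS n j Hj) as [[? ?]|[? ?]]; lia.
    + pose proof (CV j (S i mod n) Hj HSi E1 E2). lra.
Qed.

Lemma cross_prec n v i j : convex_polygon_cw n v -> (i < n)%nat -> (j < n)%nat -> i <> j ->
  cross (edir n v i) (edir n v j) < 0 -> prec n v i j.
Proof.
  intros Hc Hi Hj Hij Hcr. split; auto.
  pose proof (vert_in n v j (S i) Hc Hj) as F1.
  set (c1 := cross (edir n v j) (edir n v i)).
  assert (Hc1 : 0 < c1) by (unfold c1; geo; lra).
  set (c0 := cross (edir n v j) (psub (vtx n v i) (vtx n v j))).
  assert (F : c0 + c1 <= 0) by (unfold c0, c1; unfold edir in *; geo; lra).
  exists (- c0 / c1). split.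
  - apply (Rmult_le_reg_r c1); auto. unfold Rdiv. rewrite Rmult_assoc, Rinv_l by lra. lra.
  - unfold on_line.
    replace (cross (edir n v j) (psub (padd (vtx n v i) (pscale (- c0 / c1) (edir n v i))) (vtx n v j)))
      with (c0 + (- c0 / c1) * c1) by (unfold c0, c1; geo; ring).
    field. lra.
Qed.

Lemma online_closed n v j X : convex_polygon_cw n v -> (j < n)%nat -> in_P n v X ->
  on_line n v j X -> exists t, 0 <= t <= 1 /\ X = padd (vtx n v j) (pscale t (edir n v j)).
Proof.
  intros Hc Hj HP Hl. unfold on_line in Hl.
  pose proof Hc as [H3 CV].
  destruct (prev_idx n j Hj) as [jm [Hjm Ejm]].
  pose proof (consec n v j Hc Hj) as C1.
  pose proof (consec n v jm Hc Hjm) as C0.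
  rewrite <- edir_S_mod in C0 by lia. rewrite Ejm in C0.
  assert (HDm : edir n v jm = psub (vtx n v j) (vtx n v jm)).
  { unfold edir. rewrite <- vtx_S_mod by lia. rewrite Ejm. reflexivity. }
  assert (HS: (S j mod n < n)%nat) by (apply Nat.mod_upper_bound; lia).
  pose proof (HP jm Hjm) as P0. pose proof (HP _ HS) as P1.
  rewrite edir_S_mod, vtx_S_mod in P1 by lia.
  set (a := fst (edir n v j)). set (b := snd (edir n v j)).
  assert (Hab : a * a + b * b > 0).
  { unfold cross in C1. fold a b in C1.
    destruct (Req_dec a 0) as [Ha|Ha]; destruct (Req_dec b 0) as [Hb|Hb].
    - rewrite Ha, Hb in C1. lra.
    - pose proof (Rsqr_pos_lt b Hb). unfold Rsqr in *. nra.
    - pose proof (Rsqr_pos_lt a Ha). unfold Rsqr in *. nra.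
    - pose proof (Rsqr_pos_lt a Ha). unfold Rsqr in *. nra. }
  set (x := fst X - fst (vtx n v j)). set (y := snd X - snd (vtx n v j)).
  assert (Hxy : a * y - b * x = 0) by (unfold a, b, x, y; geo; lra).
  set (t := (a * x + b * y) / (a * a + b * b)).
  assert (H1 : b * (a * y - b * x) = 0) by (rewrite Hxy; ring).
  assert (H2 : a * (a * y - b * x) = 0) by (rewrite Hxy; ring).
  assert (Tx : t * a = x).
  { unfold t. apply (Rmult_eq_reg_r (a * a + b * b)); [|lra]. field_simplify; [|lra]. lra. }
  assert (Ty : t * b = y).
  { unfold t. apply (Rmult_eq_reg_r (a * a + b * b)); [|lra]. field_simplify; [|lra]. lra. }
  assert (EX : X = padd (vtx n v j) (pscale t (edir n v j))).
  { destruct X as [X1 X2]. unfold x, y, a, b in *. geo. f_equal; lra. }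
  exists t. split; [|exact EX].
  rewrite EX in P0, P1. rewrite HDm in P0, C0.
  unfold edir in *. geo. split; nra.
Qed.

Definition par4 (W0 W1 W2 W3 : pt) : Prop :=
  padd W0 W2 = padd W1 W3 /\ cross (psub W1 W0) (psub W3 W0) < 0.

Definition LM4 n v (W0 W1 W2 W3 : pt) : Prop :=
  exists delta, 0 < delta /\ forall B0 B1 B2 B3, par4 B0 B1 B2 B3 ->
    in_P n v B0 -> in_P n v B1 -> in_P n v B2 -> in_P n v B3 ->
    Defs.dist W0 B0 < delta -> Defs.dist W1 B1 < delta -> Defs.dist W2 B2 < delta -> Defs.dist W3 B3 < delta ->
    Rabs (cross (psub B1 B0) (psub B3 B0)) <= Rabs (cross (psub W1 W0) (psub W3 W0)).

Lemma LMAP_LM4 n v A : locally_maximal n v A -> LM4 n v (A 0%nat) (A 1%nat) (A 2%nat) (A 3%nat).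
Proof.
  intros [d [Hd H]]. exists d. split; auto.
  intros B0 B1 B2 B3 Hp P0 P1 P2 P3 D0 D1 D2 D3.
  set (Bf := fun k : nat => match k with 0 => B0 | 1 => B1 | 2 => B2 | _ => B3 end).
  apply (H Bf).
  - exact Hp.
  - intros k Hk. destruct k as [|[|[|[|k]]]]; simpl; auto; try lia.
  - intros k Hk. destruct k as [|[|[|[|k]]]]; simpl; auto; try lia.
Qed.

Lemma sum_comp (B0 B1 B2 B3 : pt) : padd B0 B2 = padd B1 B3 ->
  fst B0 + fst B2 = fst B1 + fst B3 /\ snd B0 + snd B2 = snd B1 + snd B3.
Proof. intros H. split; [apply (f_equal fst) in H|apply (f_equal snd) in H]; exact H. Qed.

Lemma sub_eq_of_sum (B0 B1 B2 B3 : pt) : padd B0 B2 = padd B1 B3 -> psub B3 B0 = psub B2 B1.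
Proof.
  intros H. apply sum_comp in H. destruct H as [H1 H2]. unfold psub. f_equal; lra.
Qed.

Lemma cross_shift (B0 B1 B2 B3 : pt) : padd B0 B2 = padd B1 B3 ->
  cross (psub B0 B3) (psub B2 B3) = cross (psub B1 B0) (psub B3 B0).
Proof.
  intros H. apply sum_comp in H. destruct H as [H1 H2].
  destruct B0 as [x0 y0], B1 as [x1 y1], B2 as [x2 y2], B3 as [x3 y3]. simpl in *.
  assert (E1 : x2 = x1 + x3 - x0) by lra. assert (E2 : y2 = y1 + y3 - y0) by lra.
  subst x2 y2. geo. ring.
Qed.

Lemma LM4_shift n v W0 W1 W2 W3 : padd W0 W2 = padd W1 W3 ->
  LM4 n v W0 W1 W2 W3 -> LM4 n v W1 W2 W3 W0.
Proof.
  intros Hs [d [Hd H]]. exists d. split; auto.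
  intros B0 B1 B2 B3 [Bs Bo] P0 P1 P2 P3 D0 D1 D2 D3.
  assert (Bs' : padd B3 B1 = padd B0 B2).
  { apply sum_comp in Bs. destruct Bs. unfold padd. f_equal; lra. }
  assert (Hs' : padd W1 W3 = padd W2 W0).
  { apply sum_comp in Hs. destruct Hs. unfold padd. f_equal; lra. }
  rewrite <- (cross_shift B0 B1 B2 B3 Bs).
  rewrite <- (cross_shift W1 W2 W3 W0 Hs').
  apply (H B3 B0 B1 B2); auto. split; auto.
  rewrite (cross_shift B0 B1 B2 B3 Bs). exact Bo.
Qed.

Lemma dist_move X u e : Defs.dist X (padd X (pscale u e)) = Rabs u * sqrt (fst e * fst e + snd e * snd e).
Proof.
  assert (E : forall z, z = Rsqr u * (fst e * fst e + snd e * snd e) ->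
     sqrt z = Rabs u * sqrt (fst e * fst e + snd e * snd e)).
  { intros z ->. rewrite sqrt_mult_alt by apply Rle_0_sqr. rewrite sqrt_Rsqr_abs. reflexivity. }
  unfold Defs.dist. apply E. unfold padd, pscale, Rsqr. simpl. ring.
Qed.

Lemma small_move e delta : 0 < delta -> exists h0, 0 < h0 /\
  forall u X, Rabs u <= h0 -> Defs.dist X (padd X (pscale u e)) < delta.
Proof.
  intros Hd. set (E := sqrt (fst e * fst e + snd e * snd e)).
  assert (HE : 0 <= E) by apply sqrt_pos.
  exists (delta / (2 * (1 + E))). split.
  - apply Rdiv_lt_0_compat; lra.
  - intros u X Hu. rewrite dist_move. fold E.
    assert (Hu0 : 0 <= Rabs u) by apply Rabs_pos.
    assert (Hm : delta / (2 * (1 + E)) * (2 * (1 + E)) = delta) by (field; lra).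
    nra.
Qed.

Lemma in_P_convex n v a b t : in_P n v a -> in_P n v b -> 0 <= t <= 1 ->
  in_P n v (padd a (pscale t (psub b a))).
Proof.
  intros Ha Hb Ht k Hk. specialize (Ha k Hk). specialize (Hb k Hk). geo. nra.
Qed.

Definition movable n v (X : pt) (c : R) (e : pt) : Prop :=
  c = 0 \/ exists i t, (i < n)%nat /\ 0 < t < 1 /\ X = padd (vtx n v i) (pscale t (edir n v i)) /\ e = edir n v i.

Lemma move_ok n v X c e delta : convex_polygon_cw n v -> movable n v X c e -> in_P n v X -> 0 < delta ->
  exists h0, 0 < h0 /\ forall s, Rabs s <= h0 ->
    in_P n v (padd X (pscale (s * c) e)) /\ Defs.dist X (padd X (pscale (s * c) e)) < delta.
Proof.
  intros Hc Hm HX Hd.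
  destruct (small_move e delta Hd) as [h1 [Hh1 Hmv]].
  destruct Hm as [Hc0 | [i [t [Hi [Ht [EX Ee]]]]]].
  - exists 1. split; [lra|]. intros s Hs. subst c.
    replace (padd X (pscale (s * 0) e)) with X by (destruct X; geo; f_equal; ring).
    split; auto. unfold Defs.dist. replace ((fst X - fst X) ^ 2 + (snd X - snd X) ^ 2) with 0 by ring.
    rewrite sqrt_0. lra.
  - set (m := Rmin t (1 - t)).
    assert (Hm0 : 0 < m) by (apply Rmin_pos; lra).
    assert (Hmt : m <= t) by apply Rmin_l. assert (Hm1 : m <= 1 - t) by apply Rmin_r.
    set (K := Rabs c + 1).
    assert (HK : 0 < K) by (unfold K; pose proof (Rabs_pos c); lra).
    exists (Rmin m h1 / K). split.
    + apply Rdiv_lt_0_compat; auto. apply Rmin_pos; auto.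
    + intros s Hs.
      assert (Hmm : Rmin m h1 / K * K = Rmin m h1) by (field; lra).
      assert (Hs0 : 0 <= Rabs s) by apply Rabs_pos.
      assert (Hc0 : 0 <= Rabs c) by apply Rabs_pos.
      assert (Hsc : Rabs (s * c) <= Rmin m h1).
      { rewrite Rabs_mult. unfold K in *. nra. }
      assert (Hr1 : Rmin m h1 <= m) by apply Rmin_l. assert (Hr2 : Rmin m h1 <= h1) by apply Rmin_r.
      split.
      * rewrite EX, Ee.
        replace (padd (padd (vtx n v i) (pscale t (edir n v i))) (pscale (s * c) (edir n v i)))
          with (padd (vtx n v i) (pscale (t + s * c) (edir n v i))) by (geo; f_equal; ring).
        apply closed_edge_in; auto.
        pose proof (Rle_abs (s * c)). pose proof (Rle_abs (- (s * c))).
        rewrite Rabs_Ropp in *. lra.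
      * apply Hmv. lra.
Qed.

Lemma perturb n v W0 W1 W2 W3 c0 c1 c2 c3 e0 e1 e2 e3 :
  convex_polygon_cw n v -> LM4 n v W0 W1 W2 W3 ->
  padd W0 W2 = padd W1 W3 -> cross (psub W1 W0) (psub W3 W0) < 0 ->
  in_P n v W0 -> in_P n v W1 -> in_P n v W2 -> in_P n v W3 ->
  movable n v W0 c0 e0 -> movable n v W1 c1 e1 -> movable n v W2 c2 e2 -> movable n v W3 c3 e3 ->
  padd (pscale c0 e0) (pscale c2 e2) = padd (pscale c1 e1) (pscale c3 e3) ->
  cross (psub (pscale c0 e0) (pscale c1 e1)) (psub (pscale c2 e2) (pscale c1 e1)) > 0 ->
  False.
Proof.
  intros Hc [d [Hd LM]] Hs Ho P0 P1 P2 P3 M0 M1 M2 M3 Hsum HK.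
  destruct (move_ok n v W0 c0 e0 d Hc M0 P0 Hd) as [h0 [Hh0 G0]].
  destruct (move_ok n v W1 c1 e1 d Hc M1 P1 Hd) as [h1 [Hh1 G1]].
  destruct (move_ok n v W2 c2 e2 d Hc M2 P2 Hd) as [h2 [Hh2 G2]].
  destruct (move_ok n v W3 c3 e3 d Hc M3 P3 Hd) as [h3 [Hh3 G3]].
  set (h := Rmin (Rmin h0 h1) (Rmin h2 h3)).
  assert (Hh : 0 < h) by (unfold h; repeat apply Rmin_pos; auto).
  assert (Hb0 : h <= h0) by (unfold h; eapply Rle_trans; [apply Rmin_l|apply Rmin_l]).
  assert (Hb1 : h <= h1) by (unfold h; eapply Rle_trans; [apply Rmin_l|apply Rmin_r]).
  assert (Hb2 : h <= h2) by (unfold h; eapply Rle_trans; [apply Rmin_r|apply Rmin_l]).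
  assert (Hb3 : h <= h3) by (unfold h; eapply Rle_trans; [apply Rmin_r|apply Rmin_r]).
  set (m0 := pscale c0 e0). set (m1 := pscale c1 e1). set (m2 := pscale c2 e2). set (m3 := pscale c3 e3).
  fold m0 m1 m2 m3 in Hsum, HK.
  set (L := cross (psub m0 m1) (psub W2 W1) + cross (psub W0 W1) (psub m2 m1)).
  set (Kq := cross (psub m0 m1) (psub m2 m1)).
  set (s := if Rle_dec 0 L then h else - h).
  assert (Hsa : Rabs s = h) by (unfold s; destruct (Rle_dec 0 L); [apply Rabs_pos_eq; lra | rewrite Rabs_Ropp; apply Rabs_pos_eq; lra]).
  assert (HsL : 0 <= s * L) by (unfold s; destruct (Rle_dec 0 L); nra).
  assert (Hs2 : 0 < s * s) by (unfold s; destruct (Rle_dec 0 L); nra).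
  destruct (G0 s ltac:(lra)) as [Q0 D0]. destruct (G1 s ltac:(lra)) as [Q1 D1].
  destruct (G2 s ltac:(lra)) as [Q2 D2]. destruct (G3 s ltac:(lra)) as [Q3 D3].
  set (B0 := padd W0 (pscale (s * c0) e0)) in *.
  set (B1 := padd W1 (pscale (s * c1) e1)) in *.
  set (B2 := padd W2 (pscale (s * c2) e2)) in *.
  set (B3 := padd W3 (pscale (s * c3) e3)) in *.
  apply sum_comp in Hs. apply sum_comp in Hsum.
  unfold m0, m1, m2, m3 in Hsum. simpl in Hsum.
  assert (BS : padd B0 B2 = padd B1 B3).
  { unfold B0, B1, B2, B3, padd, pscale. simpl. destruct Hs as [Hz1 Hz2], Hsum as [Hm1 Hm2].
    assert (F1 : s * (c0 * fst e0 + c2 * fst e2) = s * (c1 * fst e1 + c3 * fst e3)) by (rewrite Hm1; reflexivity).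
    assert (F2 : s * (c0 * snd e0 + c2 * snd e2) = s * (c1 * snd e1 + c3 * snd e3)) by (rewrite Hm2; reflexivity).
    f_equal; nra. }
  assert (E3 : psub B3 B0 = psub B2 B1) by (apply sub_eq_of_sum; exact BS).
  assert (EW : psub W3 W0 = psub W2 W1).
  { apply sub_eq_of_sum. unfold padd. destruct Hs. destruct W0, W1, W2, W3. simpl in *. f_equal; lra. }
  assert (Ecr : cross (psub B1 B0) (psub B3 B0) = cross (psub W1 W0) (psub W3 W0) - s * L - (s * s) * Kq).
  { rewrite E3, EW. unfold B0, B1, B2, L, Kq, m0, m1, m2. geo. ring. }
  assert (HKq : Kq > 0) by exact HK.
  assert (Hneg : cross (psub B1 B0) (psub B3 B0) < 0) by (rewrite Ecr; nra).
  specialize (LM B0 B1 B2 B3 (conj BS Hneg) Q0 Q1 Q2 Q3 D0 D1 D2 D3).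
  rewrite (Rabs_left _ Hneg), (Rabs_left _ Ho) in LM. rewrite Ecr in LM. nra.
Qed.

Lemma finmin (Q : nat -> R -> Prop) m :
  (forall j, (j < m)%nat -> exists e, 0 < e /\ forall t, 0 <= t <= e -> Q j t) ->
  exists e, 0 < e /\ forall j t, (j < m)%nat -> 0 <= t <= e -> Q j t.
Proof.
  induction m as [|m IH]; intros H.
  - exists 1. split; [lra|]. intros; lia.
  - destruct IH as [e1 [He1 H1]]. { intros j Hj. apply H. lia. }
    destruct (H m ltac:(lia)) as [e2 [He2 H2]].
    exists (Rmin e1 e2). split; [apply Rmin_pos; auto|].
    intros j t Hj Ht. pose proof (Rmin_l e1 e2). pose proof (Rmin_r e1 e2).
    destruct (Nat.eq_dec j m) as [->|Hne].
    + apply H2. lra.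
    + apply H1; [lia|lra].
Qed.

Lemma interior_ball n v Y w : (forall k, (k < n)%nat -> cross (edir n v k) (psub Y (vtx n v k)) < 0) ->
  exists e, 0 < e /\ forall t, 0 <= t <= e -> in_P n v (padd Y (pscale t w)).
Proof.
  intros H.
  destruct (finmin (fun k t => cross (edir n v k) (psub (padd Y (pscale t w)) (vtx n v k)) <= 0) n) as [e [He Hq]].
  - intros j Hj. specialize (H j Hj).
    set (c0 := cross (edir n v j) (psub Y (vtx n v j))) in *.
    set (c1 := cross (edir n v j) w).
    set (a := Rabs c1).
    assert (Ha : 0 <= a) by apply Rabs_pos.
    assert (Hc1 : c1 <= a) by apply Rle_abs.
    exists (- c0 / (a + 1)). split.
    + apply Rdiv_lt_0_compat; lra.
    + intros t Ht.
      assert (Ee : - c0 / (a + 1) * (a + 1) = - c0) by (field; lra).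
      replace (cross (edir n v j) (psub (padd Y (pscale t w)) (vtx n v j))) with (c0 + t * c1)
        by (unfold c0, c1; geo; ring).
      nra.
  - exists e. split; auto. intros t Ht k Hk. apply Hq; auto.
Qed.

Lemma inscribed1 n v W0 W1 W2 W3 :
  LM4 n v W0 W1 W2 W3 ->
  padd W0 W2 = padd W1 W3 -> cross (psub W1 W0) (psub W3 W0) < 0 ->
  in_P n v W0 -> in_P n v W1 -> in_P n v W2 -> in_P n v W3 ->
  exists k, (k < n)%nat /\ on_line n v k W1.
Proof.
  intros [d [Hd LM]] Hs Ho P0 P1 P2 P3.
  apply NNPP. intro Hno.
  assert (Hint : forall k, (k < n)%nat -> cross (edir n v k) (psub W1 (vtx n v k)) < 0).
  { intros k Hk. destruct (Rle_lt_or_eq_dec _ _ (P1 k Hk)) as [?|E]; auto.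
    exfalso. apply Hno. exists k. split; auto. }
  set (s1 := psub W1 W0).
  destruct (interior_ball n v W1 s1 Hint) as [e1 [He1 Hb1]].
  set (Wp := padd W1 (pscale e1 s1)).
  assert (HWp : in_P n v Wp) by (apply Hb1; lra).
  set (w2 := psub Wp W2).
  destruct (interior_ball n v W1 w2 Hint) as [e2 [He2 Hb2]].
  destruct (small_move w2 d Hd) as [h1 [Hh1 Hm]].
  set (t := Rmin (Rmin e2 1) h1).
  assert (Ht0 : 0 < t) by (unfold t; repeat apply Rmin_pos; lra).
  assert (Ht1 : t <= e2) by (unfold t; eapply Rle_trans; [apply Rmin_l|apply Rmin_l]).
  assert (Ht2 : t <= 1) by (unfold t; eapply Rle_trans; [apply Rmin_l|apply Rmin_r]).
  assert (Ht3 : t <= h1) by (unfold t; apply Rmin_r).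
  assert (Hta : Rabs t <= h1) by (rewrite Rabs_pos_eq; lra).
  set (B1 := padd W1 (pscale t w2)). set (B2 := padd W2 (pscale t w2)).
  assert (Q1 : in_P n v B1) by (apply Hb2; lra).
  assert (Q2 : in_P n v B2) by (apply in_P_convex; auto; lra).
  assert (D0 : Defs.dist W0 W0 < d).
  { unfold Defs.dist. replace ((fst W0 - fst W0) ^ 2 + (snd W0 - snd W0) ^ 2) with 0 by ring. rewrite sqrt_0; lra. }
  assert (D3 : Defs.dist W3 W3 < d).
  { unfold Defs.dist. replace ((fst W3 - fst W3) ^ 2 + (snd W3 - snd W3) ^ 2) with 0 by ring. rewrite sqrt_0; lra. }
  pose proof (Hm t W1 Hta) as D1. pose proof (Hm t W2 Hta) as D2.
  apply sum_comp in Hs. destruct Hs as [Hs1 Hs2].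
  assert (BS : padd W0 B2 = padd B1 W3).
  { unfold B1, B2, padd, pscale. simpl. f_equal; lra. }
  assert (Ecr : cross (psub B1 W0) (psub W3 W0) = cross (psub W1 W0) (psub W3 W0) * (1 + t * e1)).
  { unfold B1, w2, Wp, s1. destruct W0 as [a0 b0], W1 as [a1 b1], W2 as [a2 b2], W3 as [a3 b3].
    simpl in *. geo.
    assert (E1 : a2 = a1 + a3 - a0) by lra. assert (E2 : b2 = b1 + b3 - b0) by lra. subst a2 b2. ring. }
  assert (Hpos : 0 < 1 + t * e1) by nra.
  pose proof (Rmult_lt_compat_r (1 + t * e1) _ _ Hpos Ho) as Hm2.
  assert (Hneg : cross (psub B1 W0) (psub W3 W0) < 0) by (rewrite Ecr; lra).
  specialize (LM W0 B1 B2 W3 (conj BS Hneg) P0 Q1 Q2 P3 D0 D1 D2 D3).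
  assert (Hte : 0 < t * e1) by (apply Rmult_lt_0_compat; lra).
  pose proof (Rmult_lt_compat_r (t * e1) _ _ Hte Ho) as Hm3.
  rewrite (Rabs_left _ Hneg), (Rabs_left _ Ho) in LM. rewrite Ecr in LM. lra.
Qed.

Lemma unit_exists n v X : convex_polygon_cw n v -> in_P n v X ->
  (exists k, (k < n)%nat /\ on_line n v k X) -> exists u, in_unit n v X u.
Proof.
  intros Hc HP [k [Hk Hl]].
  destruct (online_closed n v k X Hc Hk HP Hl) as [t [Ht EX]].
  destruct Hc as [H3 CV].
  destruct (Req_dec t 0) as [T0|T0].
  - exists (UVert k). split; auto. rewrite EX, T0. geo. apply injective_projections; simpl; ring.
  - destruct (Req_dec t 1) as [T1|T1].
    + exists (UVert (S k mod n)). split. { apply Nat.mod_upper_bound; lia. }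
      rewrite vtx_S_mod by lia. rewrite EX, T1. unfold edir. geo. apply injective_projections; simpl; ring.
    + exists (UEdge k). split; auto. exists t. split; [lra|auto].
Qed.

Lemma strict_rel n v i j X W t t' : convex_polygon_cw n v -> (i < n)%nat -> (j < n)%nat -> i <> j ->
  X = padd (vtx n v i) (pscale t (edir n v i)) -> 0 < t' < 1 ->
  W = padd (vtx n v j) (pscale t' (edir n v j)) -> cross (edir n v i) (psub W X) < 0.
Proof.
  intros Hc Hi Hj Hij EX Ht EW.
  pose proof (open_strict n v j i t' Hc Hj Hi Hij Ht) as H.
  rewrite <- EW in H. rewrite EX. revert H. geo. intro H. nra.
Qed.

Lemma weak_rel n v i X W t : (i < n)%nat -> in_P n v W ->
  X = padd (vtx n v i) (pscale t (edir n v i)) -> cross (edir n v i) (psub W X) <= 0.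
Proof.
  intros Hi HW EX. pose proof (HW i Hi) as H. rewrite EX. revert H. geo. intro H. nra.
Qed.

Lemma signG x y s1 s2 : cross s1 s2 < 0 ->
  cross x s1 * cross y s2 - cross x s2 * cross y s1 > 0 -> cross x y < 0.
Proof.
  intros Hc H.
  assert (E : cross x y * cross s1 s2 = cross x s1 * cross y s2 - cross x s2 * cross y s1) by (geo; ring).
  rewrite <- E in H. nra.
Qed.

Lemma prod3 a b c : 0 < a -> b < 0 -> c < 0 -> a * b * c > 0.
Proof. intros. assert (a * b < 0) by nra. nra. Qed.

Lemma sum_rels (X0 Y X1 Z : pt) : padd X0 X1 = padd Y Z ->
  psub Z X0 = psub X1 Y /\ psub Z X1 = psub X0 Y.
Proof.
  intros H. apply sum_comp in H. destruct H. unfold psub. split; f_equal; lra.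
Qed.

Definition onE n v i (X : pt) t := (i < n)%nat /\ 0 < t < 1 /\ X = padd (vtx n v i) (pscale t (edir n v i)).

Lemma onE_mov n v i X t c : onE n v i X t -> movable n v X c (edir n v i).
Proof. intros [Hi [Ht EX]]. right. exists i, t. auto. Qed.

Lemma onE_inP n v i X t : convex_polygon_cw n v -> onE n v i X t -> in_P n v X.
Proof. intros Hc [Hi [Ht EX]]. rewrite EX. apply closed_edge_in; auto; lra. Qed.

Lemma caseZF n v X0 Y X1 Z ip id iq t0 t1 t2 :
  convex_polygon_cw n v -> LM4 n v X0 Y X1 Z ->
  padd X0 X1 = padd Y Z -> cross (psub Y X0) (psub Z X0) < 0 -> in_P n v Z ->
  onE n v ip X0 t0 -> onE n v id Y t1 -> onE n v iq X1 t2 -> ip <> id -> id <> iq ->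
  cross (edir n v ip) (edir n v iq) < 0 -> False.
Proof.
  intros Hc LM Hs Ho PZ E0 E1 E2 Hpd Hdq Hpq.
  pose proof E0 as [Hip [Ht0 EX0]]. pose proof E1 as [Hid [Ht1 EY]]. pose proof E2 as [Hiq [Ht2 EX1]].
  set (p := edir n v ip) in *. set (d := edir n v id) in *. set (q := edir n v iq) in *.
  pose proof Ho as Ho0.
  destruct (sum_rels X0 Y X1 Z Hs) as [R1 R2].
  pose proof (strict_rel n v id ip Y X0 t1 t0 Hc Hid Hip (not_eq_sym Hpd) EY Ht0 EX0) as f1.
  pose proof (strict_rel n v id iq Y X1 t1 t2 Hc Hid Hiq Hdq EY Ht2 EX1) as f2.
  pose proof (strict_rel n v ip id X0 Y t0 t1 Hc Hip Hid Hpd EX0 Ht1 EY) as f3.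
  pose proof (weak_rel n v ip X0 Z t0 Hip PZ EX0) as f4.
  pose proof (strict_rel n v iq id X1 Y t2 t1 Hc Hiq Hid (not_eq_sym Hdq) EX1 Ht1 EY) as f5.
  pose proof (weak_rel n v iq X1 Z t2 Hiq PZ EX1) as f6.
  fold p d q in f1, f2, f3, f4, f5, f6.
  rewrite R1 in f4, Ho. rewrite R2 in f6.
  set (s1 := psub Y X0) in *. set (s2 := psub X1 Y) in *.
  assert (g1 : cross d s1 > 0) by (revert f1; unfold s1; geo; intro; nra).
  assert (g5 : cross q s2 > 0) by (revert f5; unfold s2; geo; intro; nra).
  assert (g6 : cross q s1 >= 0) by (revert f6; unfold s1; geo; intro; nra).
  assert (Hpd' : cross p d < 0).
  { apply (signG p d s1 s2 Ho). nra. }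
  assert (Hdq' : cross d q < 0).
  { apply (signG d q s1 s2 Ho). nra. }
  apply (perturb n v X0 Y X1 Z (cross d q) (cross p q) (- cross d p) 0 p d q d Hc LM
            Hs Ho0).
  - eapply onE_inP; eauto.
  - eapply onE_inP; eauto.
  - eapply onE_inP; eauto.
  - exact PZ.
  - eapply onE_mov; eauto.
  - eapply onE_mov; eauto.
  - eapply onE_mov; eauto.
  - left; reflexivity.
  - geo. apply injective_projections; simpl; ring.
  - replace (cross (psub (pscale (cross d q) p) (pscale (cross p q) d))
                   (psub (pscale (- cross d p) q) (pscale (cross p q) d)))
      with (- cross p d * cross p q * cross d q) by (geo; ring).
    apply prod3; lra.
Qed.

Lemma caseX0F n v X0 Y X1 Z id iq ir t1 t2 t3 :
  convex_polygon_cw n v -> LM4 n v X0 Y X1 Z ->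
  padd X0 X1 = padd Y Z -> cross (psub Y X0) (psub Z X0) < 0 -> in_P n v X0 ->
  onE n v id Y t1 -> onE n v iq X1 t2 -> onE n v ir Z t3 -> id <> iq -> iq <> ir ->
  cross (edir n v ir) (edir n v id) > 0 -> False.
Proof.
  intros Hc LM Hs Ho P0 E1 E2 E3 Hdq Hqr Hrd.
  pose proof E1 as [Hid [Ht1 EY]]. pose proof E2 as [Hiq [Ht2 EX1]]. pose proof E3 as [Hir [Ht3 EZ]].
  set (d := edir n v id) in *. set (q := edir n v iq) in *. set (r := edir n v ir) in *.
  pose proof Ho as Ho0.
  destruct (sum_rels X0 Y X1 Z Hs) as [R1 R2].
  pose proof (strict_rel n v id iq Y X1 t1 t2 Hc Hid Hiq Hdq EY Ht2 EX1) as f1.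
  pose proof (weak_rel n v id Y X0 t1 Hid P0 EY) as f2.
  pose proof (strict_rel n v iq id X1 Y t2 t1 Hc Hiq Hid (not_eq_sym Hdq) EX1 Ht1 EY) as f3.
  pose proof (strict_rel n v iq ir X1 Z t2 t3 Hc Hiq Hir Hqr EX1 Ht3 EZ) as f4.
  pose proof (strict_rel n v ir iq Z X1 t3 t2 Hc Hir Hiq (not_eq_sym Hqr) EZ Ht2 EX1) as f5.
  pose proof (weak_rel n v ir Z X0 t3 Hir P0 EZ) as f6.
  fold d q r in f1, f2, f3, f4, f5, f6.
  rewrite R1 in Ho. rewrite R2 in f4.
  set (s1 := psub Y X0) in *. set (s2 := psub X1 Y) in *.
  assert (g2 : cross d s1 >= 0) by (revert f2; unfold s1; geo; intro; nra).
  assert (g3 : cross q s2 > 0) by (revert f3; unfold s2; geo; intro; nra).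
  assert (g4 : cross q s1 > 0) by (revert f4; unfold s1; geo; intro; nra).
  assert (g5 : cross r s1 < 0).
  { revert f5. unfold s1. apply sum_comp in Hs. destruct Hs. geo. intro. nra. }
  assert (g6 : cross r s2 >= 0).
  { revert f6. unfold s2. apply sum_comp in Hs. destruct Hs. geo. intro. nra. }
  assert (Hdq' : cross d q < 0).
  { apply (signG d q s1 s2 Ho). nra. }
  assert (Hqr' : cross q r < 0).
  { apply (signG q r s1 s2 Ho). nra. }
  apply (perturb n v X0 Y X1 Z 0 (- cross q r) (cross r d) (- cross d q) d d q r Hc LM
            Hs Ho0).
  - exact P0.
  - eapply onE_inP; eauto.
  - eapply onE_inP; eauto.
  - eapply onE_inP; eauto.
  - left; reflexivity.
  - eapply onE_mov; eauto.
  - eapply onE_mov; eauto.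
  - eapply onE_mov; eauto.
  - geo. apply injective_projections; simpl; ring.
  - replace (cross (psub (pscale 0 d) (pscale (- cross q r) d))
                   (psub (pscale (cross r d) q) (pscale (- cross q r) d)))
      with (cross r d * cross q r * cross d q) by (geo; ring).
    apply prod3; lra.
Qed.

Lemma caseX1F n v X0 Y X1 Z ip id ir t0 t1 t3 :
  convex_polygon_cw n v -> LM4 n v X0 Y X1 Z ->
  padd X0 X1 = padd Y Z -> cross (psub Y X0) (psub Z X0) < 0 -> in_P n v X1 ->
  onE n v ip X0 t0 -> onE n v id Y t1 -> onE n v ir Z t3 -> ip <> id -> ip <> ir ->
  cross (edir n v id) (edir n v ir) > 0 -> False.
Proof.
  intros Hc LM Hs Ho P1 E0 E1 E3 Hpd Hpr Hdr.
  pose proof E0 as [Hip [Ht0 EX0]]. pose proof E1 as [Hid [Ht1 EY]]. pose proof E3 as [Hir [Ht3 EZ]].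
  set (p := edir n v ip) in *. set (d := edir n v id) in *. set (r := edir n v ir) in *.
  pose proof Ho as Ho0.
  destruct (sum_rels X0 Y X1 Z Hs) as [R1 R2].
  pose proof (strict_rel n v ip id X0 Y t0 t1 Hc Hip Hid Hpd EX0 Ht1 EY) as f1.
  pose proof (strict_rel n v ip ir X0 Z t0 t3 Hc Hip Hir Hpr EX0 Ht3 EZ) as f2.
  pose proof (strict_rel n v id ip Y X0 t1 t0 Hc Hid Hip (not_eq_sym Hpd) EY Ht0 EX0) as f3.
  pose proof (weak_rel n v id Y X1 t1 Hid P1 EY) as f4.
  pose proof (weak_rel n v ir Z X1 t3 Hir P1 EZ) as f5.
  pose proof (strict_rel n v ir ip Z X0 t3 t0 Hc Hir Hip (not_eq_sym Hpr) EZ Ht0 EX0) as f6.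
  fold p d r in f1, f2, f3, f4, f5, f6.
  rewrite R1 in Ho, f2.
  set (s1 := psub Y X0) in *. set (s2 := psub X1 Y) in *.
  assert (g3 : cross d s1 > 0) by (revert f3; unfold s1; geo; intro; nra).
  assert (g5 : cross r s1 <= 0).
  { revert f5. unfold s1. apply sum_comp in Hs. destruct Hs. geo. intro. nra. }
  assert (g6 : cross r s2 > 0).
  { revert f6. unfold s2. apply sum_comp in Hs. destruct Hs. geo. intro. nra. }
  assert (Hpd' : cross p d < 0).
  { apply (signG p d s1 s2 Ho). nra. }
  assert (Hrp' : cross r p < 0).
  { apply (signG r p s1 s2 Ho). nra. }
  apply (perturb n v X0 Y X1 Z (cross d r) (- cross r p) 0 (- cross p d) p d d r Hc LM
            Hs Ho0).
  - eapply onE_inP; eauto.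
  - eapply onE_inP; eauto.
  - exact P1.
  - eapply onE_inP; eauto.
  - eapply onE_mov; eauto.
  - eapply onE_mov; eauto.
  - left; reflexivity.
  - eapply onE_mov; eauto.
  - geo. apply injective_projections; simpl; ring.
  - replace (cross (psub (pscale (cross d r) p) (pscale (- cross r p) d))
                   (psub (pscale 0 d) (pscale (- cross r p) d)))
      with (cross d r * cross r p * cross p d) by (geo; ring).
    apply prod3; lra.
Qed.

Definition NSp n v (X Y : pt) : Prop :=
  forall i, (i < n)%nat -> in_open_edge n v i X -> in_open_edge n v i Y -> False.

Lemma NSp_neq n v X Y i j : NSp n v X Y -> in_unit n v X (UEdge i) -> in_unit n v Y (UEdge j) -> i <> j.
Proof. intros H [Hi Ei] [Hj Ej] E. subst. apply (H j); auto. Qed.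

Lemma edge_onE n v X i : in_unit n v X (UEdge i) -> exists t, onE n v i X t.
Proof. intros [Hi [t [Ht E]]]. exists t. split; auto. Qed.

Lemma chase_edges n v a b : convex_polygon_cw n v -> (a < n)%nat -> (b < n)%nat -> a <> b ->
  cross (edir n v a) (edir n v b) < 0 -> chasing n v (UEdge a) (UEdge b).
Proof. intros Hc Ha Hb Hab H. split; simpl; apply cross_prec; auto. Qed.

Lemma ML n v X0 Y X1 Z uX0 uY uX1 uZ :
  convex_polygon_cw n v -> no_parallel_edges n v -> LM4 n v X0 Y X1 Z ->
  padd X0 X1 = padd Y Z -> cross (psub Y X0) (psub Z X0) < 0 ->
  in_P n v X0 -> in_P n v Y -> in_P n v X1 -> in_P n v Z ->
  in_unit n v X0 uX0 -> in_unit n v Y uY -> in_unit n v X1 uX1 -> in_unit n v Z uZ ->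
  NSp n v X0 Y -> NSp n v Y X1 -> NSp n v X1 Z -> NSp n v X0 Z -> NSp n v Y Z ->
  chasing n v uX0 uX1 ->
  anchored n v Y \/ (anchored n v Z /\ (anchored n v X0 \/ anchored n v X1)) \/
  (anchored n v X0 /\ chasing n v uZ uY) \/ (anchored n v X1 /\ chasing n v uY uZ).
Proof.
  intros Hc Hnp LM Hs Ho P0 PY P1 PZ U0 UY U1 UZ N01 N12 N23 N03 N13 Hch.
  destruct uY as [id|iy].
  2:{ left. destruct UY as [Hi E]. exists iy. auto. }
  pose proof UY as [Hid _].
  destruct (edge_onE n v Y id UY) as [t1 E1].
  destruct uX0 as [ip|i0]; destruct uX1 as [iq|i1].
  -
    exfalso. destruct (edge_onE n v X0 ip U0) as [t0 E0]. destruct (edge_onE n v X1 iq U1) as [t2 E2].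
    pose proof U0 as [Hip _]. pose proof U1 as [Hiq _].
    destruct Hch as [Hb _]. simpl in Hb.
    apply (caseZF n v X0 Y X1 Z ip id iq t0 t1 t2 Hc LM Hs Ho PZ E0 E1 E2).
    + exact (NSp_neq n v X0 Y ip id N01 U0 UY).
    + exact (NSp_neq n v Y X1 id iq N12 UY U1).
    + apply prec_cross; auto.
  -
    destruct uZ as [ir|iz].
    + right. right. right. split. { destruct U1 as [Hi E]. exists i1. auto. }
      destruct (edge_onE n v X0 ip U0) as [t0 E0]. destruct (edge_onE n v Z ir UZ) as [t3 E3].
      pose proof U0 as [Hip _]. pose proof UZ as [Hir _].
      assert (Hdr : id <> ir) by exact (NSp_neq n v Y Z id ir N13 UY UZ).
      apply chase_edges; auto.
      pose proof (Hnp id ir Hid Hir Hdr).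
      destruct (Rtotal_order (cross (edir n v id) (edir n v ir)) 0) as [?|[?|?]]; auto; try lra.
      exfalso. apply (caseX1F n v X0 Y X1 Z ip id ir t0 t1 t3 Hc LM Hs Ho P1 E0 E1 E3).
      * exact (NSp_neq n v X0 Y ip id N01 U0 UY).
      * exact (NSp_neq n v X0 Z ip ir N03 U0 UZ).
      * lra.
    + right. left. split. { destruct UZ as [Hi E]. exists iz. auto. }
      right. destruct U1 as [Hi E]. exists i1. auto.
  -
    destruct uZ as [ir|iz].
    + right. right. left. split. { destruct U0 as [Hi E]. exists i0. auto. }
      destruct (edge_onE n v X1 iq U1) as [t2 E2]. destruct (edge_onE n v Z ir UZ) as [t3 E3].
      pose proof U1 as [Hiq _]. pose proof UZ as [Hir _].
      assert (Hdr : ir <> id) by (intro; apply (NSp_neq n v Y Z id ir N13 UY UZ); auto).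
      apply chase_edges; auto.
      pose proof (Hnp ir id Hir Hid Hdr).
      destruct (Rtotal_order (cross (edir n v ir) (edir n v id)) 0) as [?|[?|?]]; auto; try lra.
      exfalso. apply (caseX0F n v X0 Y X1 Z id iq ir t1 t2 t3 Hc LM Hs Ho P0 E1 E2 E3).
      * exact (NSp_neq n v Y X1 id iq N12 UY U1).
      * exact (NSp_neq n v X1 Z iq ir N23 U1 UZ).
      * lra.
    + right. left. split. { destruct UZ as [Hi E]. exists iz. auto. }
      left. destruct U0 as [Hi E]. exists i0. auto.
  -
    destruct uZ as [ir|iz].
    + pose proof UZ as [Hir _].
      assert (Hdr : id <> ir) by exact (NSp_neq n v Y Z id ir N13 UY UZ).
      pose proof (Hnp id ir Hid Hir Hdr).
      destruct (Rtotal_order (cross (edir n v id) (edir n v ir)) 0) as [Hl|[Hl|Hl]]; [|lra|].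
      * right. right. right. split. { destruct U1 as [Hi E]. exists i1. auto. }
        apply chase_edges; auto.
      * right. right. left. split. { destruct U0 as [Hi E]. exists i0. auto. }
        apply chase_edges; auto. geo. lra.
    + right. left. split. { destruct UZ as [Hi E]. exists iz. auto. }
      left. destruct U0 as [Hi E]. exists i0. auto.
Qed.

Lemma par4_shift W0 W1 W2 W3 : par4 W0 W1 W2 W3 -> par4 W1 W2 W3 W0.
Proof.
  intros [Hs Ho].
  assert (Hs' : padd W1 W3 = padd W2 W0).
  { apply sum_comp in Hs. destruct Hs. unfold padd. f_equal; lra. }
  split; auto. rewrite <- (cross_shift W1 W2 W3 W0 Hs'). exact Ho.
Qed.

Lemma NS_of n v A k l : ~ slidable n v A -> (k < 4)%nat -> (l < 4)%nat -> k <> l -> NSp n v (A k) (A l).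
Proof. intros H Hk Hl Hkl i Hi E1 E2. apply H. exists k, l, i. auto 10. Qed.

Lemma finish n v A a b c e uX0 uY uX1 uZ :
  (a < 4)%nat -> (b < 4)%nat -> (c < 4)%nat -> (e < 4)%nat ->
  corner A (b + 3) = A a -> corner A (b + 1) = A c ->
  corner A (e + 3) = A c -> corner A (e + 1) = A a ->
  corner A (a + 3) = A e -> corner A (a + 1) = A b ->
  corner A (c + 3) = A b -> corner A (c + 1) = A e ->
  in_unit n v (A a) uX0 -> in_unit n v (A b) uY -> in_unit n v (A c) uX1 -> in_unit n v (A e) uZ ->
  chasing n v uX0 uX1 ->
  (anchored n v (A b) \/ (anchored n v (A e) /\ (anchored n v (A a) \/ anchored n v (A c))) \/
   (anchored n v (A a) /\ chasing n v uZ uY) \/ (anchored n v (A c) /\ chasing n v uY uZ)) ->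
  (exists k, (k < 4)%nat /\ anchored n v (A k) /\ narrow n v A k) \/
  (exists k, (k < 4)%nat /\ anchored n v (A k) /\ broad n v A k /\
     (anchored n v (corner A (k + 3)) \/ anchored n v (corner A (k + 1)))) \/
  (forall k, (k < 4)%nat -> even n v A k).
Proof.
  intros Ha Hb Hc He Cb3 Cb1 Ce3 Ce1 Ca3 Ca1 Cc3 Cc1 U0 UY U1 UZ Hch H.
  destruct H as [H|[[H1 H2]|[[H1 H2]|[H1 H2]]]].
  - left. exists b. split; auto. split; auto. exists uX0, uX1. rewrite Cb3, Cb1. auto.
  - right. left. exists e. split; auto. split; auto. split.
    + exists uX1, uX0. rewrite Ce3, Ce1. auto.
    + rewrite Ce3, Ce1. tauto.
  - left. exists a. split; auto. split; auto. exists uZ, uY. rewrite Ca3, Ca1. auto.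
  - left. exists c. split; auto. split; auto. exists uY, uZ. rewrite Cc3, Cc1. auto.
Qed.

Theorem lemma13 (n : nat) (v : nat -> pt) (A : nat -> pt) :
  convex_polygon_cw n v ->
  no_parallel_edges n v ->
  LMAP n v A ->
  (exists k, (k < 4)%nat /\ anchored n v (A k) /\ narrow n v A k) \/
  (exists k, (k < 4)%nat /\ anchored n v (A k) /\ broad n v A k /\
     (anchored n v (corner A (k + 3)) \/ anchored n v (corner A (k + 1)))) \/
  (forall k, (k < 4)%nat -> even n v A k).
Proof.
  intros Hc Hnp [Hpar [Hlies [Hlm Hns]]].
  pose proof (LMAP_LM4 n v A Hlm) as L0.
  assert (P0 : par4 (A 0%nat) (A 1%nat) (A 2%nat) (A 3%nat)) by exact Hpar.
  pose proof (par4_shift _ _ _ _ P0) as P1.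
  pose proof (par4_shift _ _ _ _ P1) as P2.
  pose proof (par4_shift _ _ _ _ P2) as P3.
  pose proof (LM4_shift n v _ _ _ _ (proj1 P0) L0) as L1.
  pose proof (LM4_shift n v _ _ _ _ (proj1 P1) L1) as L2.
  pose proof (LM4_shift n v _ _ _ _ (proj1 P2) L2) as L3.
  assert (I0 : in_P n v (A 0%nat)) by (apply Hlies; lia).
  assert (I1 : in_P n v (A 1%nat)) by (apply Hlies; lia).
  assert (I2 : in_P n v (A 2%nat)) by (apply Hlies; lia).
  assert (I3 : in_P n v (A 3%nat)) by (apply Hlies; lia).
  destruct (unit_exists n v (A 0%nat) Hc I0
     (inscribed1 n v _ _ _ _ L3 (proj1 P3) (proj2 P3) I3 I0 I1 I2)) as [u0 U0].
  destruct (unit_exists n v (A 1%nat) Hc I1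
     (inscribed1 n v _ _ _ _ L0 (proj1 P0) (proj2 P0) I0 I1 I2 I3)) as [u1 U1].
  destruct (unit_exists n v (A 2%nat) Hc I2
     (inscribed1 n v _ _ _ _ L1 (proj1 P1) (proj2 P1) I1 I2 I3 I0)) as [u2 U2].
  destruct (unit_exists n v (A 3%nat) Hc I3
     (inscribed1 n v _ _ _ _ L2 (proj1 P2) (proj2 P2) I2 I3 I0 I1)) as [u3 U3].
  assert (NS : forall k l, (k < 4)%nat -> (l < 4)%nat -> k <> l -> NSp n v (A k) (A l))
    by (intros; apply NS_of; auto).
  match goal with |- ?G => assert (N0 : chasing n v u3 u1 -> G) end.
  { intro Hch.
    apply (finish n v A 3 0 1 2 u3 u0 u1 u2); auto; try reflexivity.
    destruct P3 as [Hs Ho].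
    apply (ML n v _ _ _ _ u3 u0 u1 u2 Hc Hnp L3 Hs Ho); auto; apply NS; lia. }
  match goal with |- ?G => assert (N1 : chasing n v u0 u2 -> G) end.
  { intro Hch.
    apply (finish n v A 0 1 2 3 u0 u1 u2 u3); auto; try reflexivity.
    destruct P0 as [Hs Ho].
    apply (ML n v _ _ _ _ u0 u1 u2 u3 Hc Hnp L0 Hs Ho); auto; apply NS; lia. }
  match goal with |- ?G => assert (N2 : chasing n v u1 u3 -> G) end.
  { intro Hch.
    apply (finish n v A 1 2 3 0 u1 u2 u3 u0); auto; try reflexivity.
    destruct P1 as [Hs Ho].
    apply (ML n v _ _ _ _ u1 u2 u3 u0 Hc Hnp L1 Hs Ho); auto; apply NS; lia. }
  match goal with |- ?G => assert (N3 : chasing n v u2 u0 -> G) end.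
  { intro Hch.
    apply (finish n v A 2 3 0 1 u2 u3 u0 u1); auto; try reflexivity.
    destruct P2 as [Hs Ho].
    apply (ML n v _ _ _ _ u2 u3 u0 u1 Hc Hnp L2 Hs Ho); auto; apply NS; lia. }
  destruct (classic (forall k, (k < 4)%nat -> even n v A k)) as [Hall|Hnot].
  { right. right. exact Hall. }
  apply not_all_ex_not in Hnot. destruct Hnot as [k Hk].
  apply imply_to_and in Hk. destruct Hk as [Hk4 Hne].
  destruct k as [|[|[|[|k]]]]; [| | | |lia].
  - destruct (classic (chasing n v u3 u1)) as [C|C]; [exact (N0 C)|].
    destruct (classic (chasing n v u1 u3)) as [C'|C']; [exact (N2 C')|].
    exfalso. apply Hne. exists u3, u1. auto.
  - destruct (classic (chasing n v u0 u2)) as [C|C]; [exact (N1 C)|].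
    destruct (classic (chasing n v u2 u0)) as [C'|C']; [exact (N3 C')|].
    exfalso. apply Hne. exists u0, u2. auto.
  - destruct (classic (chasing n v u1 u3)) as [C|C]; [exact (N2 C)|].
    destruct (classic (chasing n v u3 u1)) as [C'|C']; [exact (N0 C')|].
    exfalso. apply Hne. exists u1, u3. auto.
  - destruct (classic (chasing n v u2 u0)) as [C|C]; [exact (N3 C)|].
    destruct (classic (chasing n v u0 u2)) as [C'|C']; [exact (N1 C')|].
    exfalso. apply Hne. exists u2, u0. auto.
Qed.
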